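(* Let $G$ be an $\alpha_1$-metric graph. Then $diam(C(G))\le 3$ and $rad(C(G))\le 2$.
   Context: All graphs are finite, connected, unweighted, undirected, simple; $d(u,v)$ is the shortest-path distance. $I(u,v)=\{x: d(u,x)+d(x,v)=d(u,v)\}$. A graph is $\alpha_1$-metric if for all vertices $u,v,w,x$: whenever $v\in I(u,w)$, $w\in I(v,x)$ and $v,w$ are adjacent, then $d(u,x)\ge d(u,v)+d(v,x)-1$. $e(v)=\max_u d(u,v)$, $rad(G)=\min_v e(v)$, $C(G)=\{v: e(v)=rad(G)\}$. Here $diam(C(G))$ and $rad(C(G))$ denote the diameter and radius of the subgraph of $G$ induced by $C(G)$ (this subgraph is connected). *)

(* Defs.v *)
From mathcomp Require Import all_boot.
Set Implicit Arguments. Unset Strict Implicit. Unset Printing Implicit Defensive.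

Section Graph.
Variable T : finType.

Fixpoint ball (e : rel T) (k : nat) (u : T) : {set T} :=
  match k with
  | 0 => [set u]
  | k'.+1 => ball e k' u :|: [set y | [exists x in ball e k' u, e x y]]
  end.

(* shortest-path distance: least k with v in ball e k u
   (equals #|T| if v is unreachable from u, which never happens in a
    connected graph, since distances are < #|T|) *)
Definition dist (e : rel T) (u v : T) : nat :=
  find (fun k => v \in ball e k u) (iota 0 #|T|).

Definition simple_graph (e : rel T) : Prop :=
  symmetric e /\ irreflexive e.

Definition connected_graph (e : rel T) : Prop :=
  forall u v : T, connect e u v.

Definition in_interval (e : rel T) (u v x : T) : bool :=
  dist e u x + dist e x v == dist e u v.

Definition alpha1_metric (e : rel T) : Prop :=
  forall u v w x : T,
    in_interval e u w v -> in_interval e v x w -> e v w ->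
    dist e u v + dist e v x - 1 <= dist e u x.

Definition ecc (e : rel T) (v : T) : nat := \max_(u : T) dist e u v.

Definition rad (e : rel T) : nat := \big[minn/#|T|]_(v : T) ecc e v.

Definition center (e : rel T) : {set T} := [set v | ecc e v == rad e].

Definition induced (e : rel T) (S : {set T}) : rel T :=
  fun x y => [&& e x y, x \in S & y \in S].

End Graph.

(* Main.v *)
Require Import Defs.
From mathcomp Require Import all_boot.
From mathcomp Require Import zify.
Set Implicit Arguments. Unset Strict Implicit. Unset Printing Implicit Defensive.

Section Basic.
Variable T : finType.
Variable e : rel T.

Lemma ballS k u v : (v \in ball e k.+1 u) = (v \in ball e k u) || [exists x in ball e k u, e x v].
Proof. by rewrite /= in_setU in_set. Qed.

Lemma ball0 u v : (v \in ball e 0 u) = (v == u).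
Proof. by rewrite /= in_set1. Qed.

Lemma ball_mono k k' u v : k <= k' -> v \in ball e k u -> v \in ball e k' u.
Proof.
move=> /subnK <-; elim: (k' - k) => [|n IH] // H.
by rewrite addSn ballS IH.
Qed.

Lemma ball_dist k u v : v \in ball e k u -> dist e u v <= k.
Proof.
move=> H; rewrite /dist.
case: (ltnP k #|T|) => Hk.
  rewrite leqNgt; apply/negP => Hf.
  have := before_find 0 Hf; rewrite nth_iota // add0n H //.
by apply: leq_trans (find_size _ _) _; rewrite size_iota.
Qed.

Lemma dist_le_card u v : dist e u v <= #|T|.
Proof. by rewrite /dist; apply: leq_trans (find_size _ _) _; rewrite size_iota. Qed.

Lemma ball_trans a b u v w : v \in ball e a u -> w \in ball e b v -> w \in ball e (a + b) u.
Proof.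
move=> Hv; elim: b w => [|b IH] w.
  by rewrite ball0 addn0 => /eqP ->.
rewrite ballS addnS ballS => /orP[H|/existsP[z /andP[Hz Hzw]]].
  by rewrite IH.
by apply/orP; right; apply/existsP; exists z; rewrite IH.
Qed.

Lemma edge_ball u v : e u v -> v \in ball e 1 u.
Proof. by move=> H; rewrite ballS; apply/orP; right; apply/existsP; exists u; rewrite ball0 eqxx. Qed.

Lemma path_ball x p : path e x p -> last x p \in ball e (size p) x.
Proof.
elim: p x => [|y p IH] x /=; first by rewrite ball0.
case/andP=> Hxy Hp.
have := ball_trans (edge_ball Hxy) (IH _ Hp). by rewrite add1n.
Qed.

End Basic.

Section Dist.
Variable T : finType.
Variable e : rel T.
Hypothesis Esym : symmetric e.
Hypothesis eirr : irreflexive e.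
Hypothesis econn : connected_graph e.
Hypothesis ea1 : alpha1_metric e.
Local Notation d := (dist e).
Tactic Notation "slia" hyp_list(Hs) := clear - Hs; lia.

Lemma conn_ball u v : exists2 k, k < #|T| & v \in ball e k u.
Proof.
have /connectP[p Hp ->] := econn u v.
case: (shortenP Hp) => p' Hp' Hu _.
exists (size p'); last exact: path_ball.
have := max_card (mem (u :: p')).
by rewrite (card_uniqP Hu) /=.
Qed.

Lemma dist_ball u v : v \in ball e (d u v) u.
Proof.
have [k Hk Hb] := conn_ball u v.
have Hh : has (fun k => v \in ball e k u) (iota 0 #|T|).
  by apply/hasP; exists k => //; rewrite mem_iota.
have := nth_find 0 Hh.
rewrite nth_iota; first by rewrite add0n.
by move: Hh; rewrite has_find size_iota.
Qed.

Lemma dist_leP u v k : (d u v <= k) = (v \in ball e k u).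
Proof.
apply/idP/idP; last exact: ball_dist.
by move=> H; apply: ball_mono H (dist_ball u v).
Qed.

Lemma d_refl u : d u u = 0.
Proof. by apply/eqP; rewrite -leqn0 dist_leP ball0. Qed.

Lemma d_eq0 u v : d u v = 0 -> u = v.
Proof. by move=> H; have := dist_ball u v; rewrite H ball0 => /eqP ->. Qed.

Lemma ball_sym k u v : v \in ball e k u -> u \in ball e k v.
Proof.
elim: k v => [|k IH] v; first by rewrite !ball0 eq_sym.
rewrite ballS => /orP[H|/existsP[z /andP[Hz Hzv]]].
  by apply: ball_mono (IH _ H).
have H1 : z \in ball e 1 v by apply: edge_ball; rewrite Esym.
by have := ball_trans H1 (IH _ Hz); rewrite add1n.
Qed.

Lemma d_sym u v : d u v = d v u.
Proof.
by apply/eqP; rewrite eqn_leq !dist_leP; apply/andP; split; apply: ball_sym; apply: dist_ball.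
Qed.

Lemma d_tri u v w : d u w <= d u v + d v w.
Proof. by rewrite dist_leP; apply: ball_trans; apply: dist_ball. Qed.

Lemma d_edge u v : e u v -> d u v = 1.
Proof.
move=> H; apply/eqP; rewrite eqn_leq dist_leP edge_ball //= lt0n.
by apply/negP => /eqP /d_eq0 E; move: H; rewrite E eirr.
Qed.

Lemma d_1 u v : d u v = 1 -> e u v.
Proof.
move=> H; have := dist_ball u v; rewrite H ballS ball0 => /orP[/eqP E|/existsP[z]].
  by move: H; rewrite E d_refl.
by rewrite ball0 => /andP[/eqP -> ->].
Qed.

Lemma d_pred u v k : d u v = k.+1 -> exists2 z, e z v & d u z = k.
Proof.
move=> H.
have := dist_ball u v; rewrite H ballS => /orP[Hb|/existsP[z /andP[Hz Hzv]]].
  by have := ball_dist Hb; rewrite H ltnn.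
exists z => //; apply/eqP; rewrite eqn_leq dist_leP Hz /=.
have := d_tri u z v; rewrite H (d_edge Hzv); lia.
Qed.

Lemma d_succ u v k : d u v = k.+1 -> exists2 z, e u z & d z v = k.
Proof.
rewrite d_sym => /d_pred [z Hz Hd]; exists z; first by rewrite Esym.
by rewrite d_sym.
Qed.

Lemma d_edge_le u v w : e u v -> d w v <= d w u + 1.
Proof. by move=> H; apply: leq_trans (d_tri w u v) _; rewrite (d_edge H). Qed.

Lemma A1 u v w x : e v w -> d u w = d u v + 1 -> d v x = d w x + 1 -> d u v + d w x <= d u x.
Proof.
move=> Hvw Huw Hvx.
have := @ea1 u v w x.
rewrite /in_interval (d_edge Hvw) Huw Hvx eqxx addnC eqxx => /(_ isT isT Hvw).
lia.
Qed.

Lemma OS X Y Z t : e X Z -> d Z Y + 1 = d X Y ->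
  d t Z <= d t X \/ d t Z + d X Y <= d t Y + 2.
Proof.
move=> HXZ HZY; case: (leqP (d t Z) (d t X)) => h; [by left|right].
have h1 := d_edge_le t HXZ.
have := @A1 t X Z Y HXZ ltac:(lia) ltac:(lia). lia.
Qed.

Lemma CL u c1 c2 z : e u c1 -> e u c2 -> d c1 z + 1 = d u z -> d c2 z + 1 = d u z ->
  c1 != c2 -> e c1 c2.
Proof.
move=> H1 H2 E1 E2 Hne; apply/negPn/negP => Hn.
have Hc1u : d c1 u = 1 by apply: d_edge; rewrite Esym.
have Huc2 : d u c2 = 1 by apply: d_edge.
have Ht := d_tri c1 u c2.
have H12 : d c1 c2 = 2.
  case E: (d c1 c2) => [|[|[|k]]].
  - by move: Hne; rewrite (d_eq0 E) eqxx.
  - by move: Hn; rewrite (d_1 E).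
  - by [].
  - lia.
have := @A1 c1 u c2 z H2 ltac:(lia) ltac:(lia). lia.
Qed.

Lemma ecc_ge u v : d u v <= ecc e v.
Proof. rewrite /ecc (bigD1 u) //=; exact: leq_maxl. Qed.

Lemma ecc_le v k : (forall u, d u v <= k) -> ecc e v <= k.
Proof. by move=> H; apply/bigmax_leqP => u _; apply: H. Qed.

Lemma rad_le v : rad e <= ecc e v.
Proof.
rewrite /rad; have : v \in index_enum T by rewrite mem_index_enum.
elim: (index_enum T) => //= w s IH; rewrite in_cons big_cons => /orP[/eqP <-|H].
  exact: geq_minl.
by apply: leq_trans (geq_minr _ _) (IH H).
Qed.

Lemma cent_le c u : c \in center e -> d u c <= rad e.
Proof. by rewrite inE => /eqP <-; apply: ecc_ge. Qed.

Lemma le_cent c : (forall u, d u c <= rad e) -> c \in center e.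
Proof.
move=> H; rewrite inE eqn_leq rad_le andbT; exact: ecc_le.
Qed.

Lemma center_ex : 0 < #|T| -> exists c, c \in center e.
Proof.
case/card_gt0P => v0 _.
case: (arg_minnP (ecc e) (isT : predT v0)) => c _ Hc.
exists c; rewrite inE eqn_leq rad_le andbT.
rewrite /rad; apply: (big_ind (fun m => ecc e c <= m)).
- by apply: ecc_le => u; apply: dist_le_card.
- by move=> a b Ha Hb; rewrite leq_min Ha Hb.
- by move=> i _; apply: Hc.
Qed.

Lemma conv n x y z : x \in center e -> y \in center e -> d x z = n ->
  d x z + d z y = d x y -> z \in center e.
Proof.
elim: n x => [|n IH] x Hx Hy Hxz Hi.
  by rewrite -(d_eq0 Hxz).
case Exy: (d x y == n.+1).
  move/eqP: Exy => Exy; have : d z y = 0 by lia.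
  by move/d_eq0 => ->.
have [Z HxZ HZz] := d_succ Hxz.
have t1 := d_tri Z z y.
have t2 := d_tri x Z y.
have dxZ := d_edge HxZ.
have EZy : d Z y + 1 = d x y by move/negbT: Exy => Exy; lia.
have HZ : Z \in center e.
  apply: le_cent => u.
  have := cent_le u Hx; have := cent_le u Hy.
  case: (OS u HxZ EZy); move/negbT: Exy => Exy; lia.
apply: (IH Z HZ Hy HZz); lia.
Qed.

Lemma geo u v j m : d u v = j + m -> exists z, d u z = j /\ d z v = m.
Proof.
elim: m v => [|m IH] v H; first by exists v; rewrite d_refl addn0 in H *.
rewrite addnS in H; have [z' Hz' Hd] := d_pred H.
have [z [H1 H2]] := IH _ Hd.
exists z; split => //.
have := d_tri z z' v; have := d_tri u z v; rewrite (d_edge Hz'); lia.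
Qed.

Lemma ind_ball u : u \in center e -> forall k v, v \in center e -> d u v <= k ->
  v \in ball (induced e (center e)) k u.
Proof.
move=> Hu; elim => [|k IH] v Hv H.
  by rewrite ball0; apply/eqP; apply/esym/d_eq0; lia.
rewrite ballS; case: (leqP (d u v) k) => H'.
  by rewrite IH.
have [z Hz Hd] := d_pred (ltac:(lia) : d u v = k.+1).
have Hzc : z \in center e.
  by apply: (conv (n := d u z)) Hu Hv _ _ => //; rewrite (d_edge Hz); lia.
apply/orP; right; apply/existsP; exists z.
by rewrite IH ?Hd //= /induced Hz Hzc Hv.
Qed.

Lemma ind_le u v : u \in center e -> v \in center e ->
  dist (induced e (center e)) u v <= d u v.
Proof. by move=> Hu Hv; apply: ball_dist; apply: ind_ball. Qed.

Lemma D4 x y : x \in center e -> y \in center e -> d x y = 4 -> False.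
Proof.
move=> Hx Hy Hxy.
set r := rad e.
have Bx : forall t, d t x <= r := fun t => cent_le t Hx.
have By : forall t, d t y <= r := fun t => cent_le t Hy.
have r4 : 4 <= r by have := Bx y; rewrite d_sym Hxy.
pose S2 := [set z | (d x z == 2) && (d z y == 2)].
pose A z := [set a | e x a && e a z].
have [s0 [Hs01 Hs02]] := geo (Hxy : d x y = 2 + 2).
have Hs0 : s0 \in S2 by rewrite inE Hs01 Hs02 !eqxx.
case: (@arg_maxnP T s0 (fun z => z \in S2) (fun z => #|A z|) Hs0) => s Hs Hmax.
move: (Hs); rewrite inE => /andP[/eqP Hxs /eqP Hsy].
have Hsx : d s x = 2 by rewrite d_sym.
have Hys : d y s = 2 by rewrite d_sym.
have [v Hv] : exists v, r <= d v s.
  case: (boolP [exists v, r <= d v s]) => [/existsP //|/existsPn Hn].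
  have : ecc e s <= r.-1.
    by apply: ecc_le => u; have := Hn u; rewrite -ltnNge; move=> h; slia h r4.
  have := rad_le s; rewrite -/r => h1 h2; slia h1 h2 r4.
have Bvx := Bx v; have Bvy := By v.
have Sa : forall a, e x a -> e a s -> d v a = r /\ d v x = r /\ d v s = r.
  move=> a Hxa Has.
  have := d_tri a s y; have := d_tri x a y; rewrite (d_edge Hxa) (d_edge Has) => t1 t2.
  have Hay : d a y + 1 = d x y by slia t1 t2 Hxy Hsy.
  have Hsa : d s y + 1 = d a y by slia t1 t2 Hxy Hsy.
  case: (OS v Hxa Hay); case: (OS v Has Hsa) => h1 h2; slia h1 h2 Hv Bvx Bvy Hxy Hsy Hay Hsa.
have Sb : forall b, e y b -> e b s -> d v b = r /\ d v y = r.
  move=> b Hyb Hbs.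
  have := d_tri b s x; have := d_tri y b x; rewrite (d_edge Hyb) (d_edge Hbs) => t1 t2.
  have Hyx : d y x = 4 by rewrite d_sym.
  have Hbx : d b x + 1 = d y x by slia t1 t2 Hyx Hsx.
  have Hsb : d s x + 1 = d b x by slia t1 t2 Hyx Hsx.
  case: (OS v Hyb Hbx); case: (OS v Hbs Hsb) => h1 h2; slia h1 h2 Hv Bvx Bvy Hyx Hsx Hbx Hsb.
have [a Hxa Has'] := d_succ (Hxs : d x s = 1.+1).
have Has := d_1 Has'.
have [b Hyb Hbs'] := d_succ (Hys : d y s = 1.+1).
have Hbs := d_1 Hbs'.
have [Hva [Hvx Hvs]] := Sa a Hxa Has.
have [Hvb Hvy] := Sb b Hyb Hbs.
have Hvx' : d v x = r.-1.+1 by slia Hvx r4.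
have [xv Hxvx Hvxv] := d_pred Hvx'.
have Hxxv : e x xv by rewrite Esym.
have dxxv := d_edge Hxxv.
have dxvx := d_edge Hxvx.
have Hxvs : d xv s = 2.
  have := d_tri xv x s.
  case E: (d xv s) => [|[|[|[|k]]]] t.
  - by move: Hxs; rewrite -(d_eq0 E) dxxv.
  - by have [H _] := Sa xv Hxxv (d_1 E); slia H Hvxv r4.
  - by [].
  - have E1 : d s xv = d s x + 1 by rewrite d_sym E Hsx.
    have E2 : d x v = d xv v + 1.
      by rewrite d_sym (d_sym xv) Hvx Hvxv; slia r4.
    have := A1 Hxxv E1 E2; have := d_sym s v; have := d_sym xv v => h1 h2 h3.
    slia h1 h2 h3 Hvxv Hvs Hsx r4.
  - slia t dxvx Hxs E.
have Hxvy : d xv y = 3.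
  have := d_tri x xv y; have := d_tri xv s y; rewrite dxxv Hxvs Hsy Hxy => t1 t2.
  case E: (d xv y == 4); last by move/negbT: E => E; slia E t1 t2.
  move/eqP: E => E.
  have [e' Hxve' He's'] := d_succ (Hxvs : d xv s = 1.+1).
  have He's := d_1 He's'.
  have := d_tri e' s y; have := d_tri xv e' y; rewrite (d_edge Hxve') He's' Hsy => t3 t4.
  have Ee : d e' y + 1 = d xv y by slia t3 t4 E.
  have Es : d s y + 1 = d e' y by slia t3 t4 E Hsy.
  case: (OS v Hxve' Ee); case: (OS v He's Es) => h1 h2; slia h1 h2 Hvs Hvxv Bvy E Ee Es Hsy r4.
have Hxva : e xv a.
  have := d_tri a s y; have := d_tri x a y; rewrite (d_edge Hxa) Has' => t1 t2.
  apply: (CL (z:=y) Hxxv Hxa).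
  - by rewrite Hxvy Hxy.
  - by slia t1 t2 Hxy Hsy.
  by apply/negP => /eqP E; move: Hvxv; rewrite E Hva => h; slia h r4.
have Hsb : d s b = 1 by rewrite d_sym.
have Hby : d b y = 1 by rewrite d_sym; apply: d_edge.
have Hxvb : d xv b = 2.
  have := d_tri a s b; have := d_tri x a b; have := d_tri x b y.
  rewrite (d_edge Hxa) Has' Hsb Hby Hxy => t1 t2 t3.
  have Hab : d a b = 2 by slia t1 t2 t3.
  have := d_tri xv a b; have := d_tri xv b y; rewrite (d_edge Hxva) Hab Hby Hxvy => t4 t5.
  case E: (d xv b == 3); last by move/negbT: E => E; slia E t4 t5.
  move/eqP: E => E.
  have E1 : d v a = d v xv + 1 by rewrite Hva Hvxv; slia r4.
  have E2 : d xv b = d a b + 1 by rewrite E Hab.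
  have := A1 Hxva E1 E2; rewrite Hvxv Hab Hvb => h; slia h r4.
have [h Hxvh Hhb'] := d_succ (Hxvb : d xv b = 1.+1).
have Hhb := d_1 Hhb'.
have Hxh : d x h = 2.
  have := d_tri x xv h; have := d_tri x h y; have := d_tri h b y.
  rewrite dxxv (d_edge Hxvh) Hhb' Hby Hxy => t1 t2 t3; slia t1 t2 t3.
have Hhy : d h y = 2.
  have := d_tri x h y; have := d_tri h b y; rewrite Hhb' Hby Hxy Hxh => t1 t2; slia t1 t2.
have Hh : h \in S2 by rewrite inE Hxh Hhy !eqxx.
have Hbx : d b x = 3.
  have := d_tri x b y; have := d_tri b s x.
  rewrite Hby Hxy Hbs' Hsx (d_sym x b) => t1 t2; slia t1 t2.
have Hhs : e h s.
  have Hbh : e b h by rewrite Esym.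
  apply: (CL (z:=x) Hbh Hbs).
  - by rewrite d_sym Hxh Hbx.
  - by rewrite Hsx Hbx.
  apply/negP => /eqP E; move: Hxvh; rewrite E => /d_edge; rewrite Hxvs //.
have Hsub : A s \subset A h.
  apply/subsetP => a'; rewrite !inE => /andP[Hxa' Ha's].
  rewrite Hxa' /=.
  have Ha'y : d a' y = 3.
    have := d_tri a' s y; have := d_tri x a' y; rewrite (d_edge Hxa') (d_edge Ha's) Hsy Hxy.
    move=> t1 t2; slia t1 t2.
  have Ha'xv : e a' xv.
    apply: (CL (z:=y) Hxa' Hxxv).
    - by rewrite Ha'y Hxy.
    - by rewrite Hxvy Hxy.
    apply/negP => /eqP E; move: Ha's; rewrite E => /d_edge; rewrite Hxvs //.
  apply/negPn/negP => Hn.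
  have Ha'h : d a' h = 2.
    have := d_tri a' xv h; rewrite (d_edge Ha'xv) (d_edge Hxvh).
    case E: (d a' h) => [|[|[|k]]] t.
    - by move: Hxh; rewrite -(d_eq0 E) (d_edge Hxa').
    - by move: Hn; rewrite (d_1 E).
    - by [].
    - slia t.
  have := CL (z:=h) Ha'xv Ha's; rewrite (d_edge Hxvh) (d_sym s h) (d_edge Hhs) Ha'h => /(_ erefl erefl).
  have -> : xv != s by apply/negP => /eqP E; move: Hxvs; rewrite E d_refl.
  by move=> /(_ isT) /d_edge; rewrite Hxvs.
have Hprop : A s \proper A h.
  apply/properP; split => //; exists xv; rewrite !inE Hxxv //=.
  by apply/negP => /d_edge; rewrite Hxvs.
have := proper_card Hprop; have := Hmax h Hh; rewrite /geq => h1 h2; slia h1 h2.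
Qed.

Lemma diam3 u v : u \in center e -> v \in center e -> d u v <= 3.
Proof.
move=> Hu Hv; rewrite leqNgt; apply/negP => H.
have E : d u v = 4 + (d u v - 4) by slia H.
have [z [Hz1 Hz2]] := geo E.
have Hz : z \in center e by apply: (conv Hu Hv Hz1); slia Hz1 Hz2 E.
exact: (D4 Hu Hz Hz1).
Qed.

Lemma main : 0 < #|T| ->
  (forall u v, u \in center e -> v \in center e ->
     dist (induced e (center e)) u v <= 3) /\
  (exists2 c, c \in center e &
     forall v, v \in center e -> dist (induced e (center e)) c v <= 2).
Proof.
move=> HT; split.
  by move=> u v Hu Hv; apply: leq_trans (ind_le Hu Hv) (diam3 Hu Hv).
have [c0 Hc0] := center_ex HT.
pose F c := [set z in center e | 3 <= d c z].
case: (@arg_minnP T c0 (fun c => c \in center e) (fun c => #|F c|) Hc0) => c Hc Hmin.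
exists c => // v Hv; apply: leq_trans (ind_le Hc Hv) _.
rewrite leqNgt; apply/negP => H.
have Hcv : d c v = 3 by have := diam3 Hc Hv; move=> h; slia h H.
have [c' Hcc' Hc'v] := d_succ (Hcv : d c v = 2.+1).
have Hc' : c' \in center e.
  by apply: (conv (n := 1) Hc Hv); rewrite (d_edge Hcc') ?Hc'v ?Hcv.
have Hprop : F c' \proper F c.
  apply/properP; split.
    apply/subsetP => t; rewrite !inE => /andP[Ht Ht3]; rewrite Ht /=.
    have {}Ht : t \in center e by rewrite inE.
    have Ht2 := diam3 Ht Hv.
    have E : d c' v + 1 = d c v by rewrite Hc'v Hcv.
    have := d_sym c t; have := d_sym c' t => h1 h2.
    case: (OS t Hcc' E) => h3; slia h1 h2 h3 Ht2 Ht3 Hcv.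
  exists v; move: (Hv); rewrite !inE => ->; by rewrite /= ?Hcv ?Hc'v.
have := proper_card Hprop; have := Hmin c' Hc' => h1 h2; slia h1 h2.
Qed.

End Dist.

Theorem corollary11 (T : finType) (e : rel T) :
  0 < #|T| ->
  simple_graph e -> connected_graph e -> alpha1_metric e ->
  (* diam(C(G)) <= 3 *)
  (forall u v, u \in center e -> v \in center e ->
     dist (induced e (center e)) u v <= 3) /\
  (* rad(C(G)) <= 2 *)
  (exists2 c, c \in center e &
     forall v, v \in center e -> dist (induced e (center e)) c v <= 2).
Proof.
move=> HT [Hs Hi] Hc Ha.
exact: (main Hs Hi Hc Ha HT).
Qed.
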